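(* Let $A\in B$ be sets with $\mathcal P(1)\cap A=\mathcal P(1)\cap B$, where $A$ is BCST-regular and $B$ is a transitive model of $\mathsf{CZF^-}$. Let $P\subseteq A$ with $P\in B$, $a\in A$, and $R\in B$ with $R:a\rightrightarrows A\cap\mathcal P(P)$ (so $R\subseteq a\times(A\cap\mathcal P(P))$). Assume $R$ is monotone closed: for $y,z\in A$ with $y\subseteq z\subseteq P$, $\langle x,y\rangle\in R$ implies $\langle x,z\rangle\in R$. Then there is $b\in A$ with $b\subseteq P$ and $\langle x,b\rangle\in R$ for all $x\in a$.
   Context: Work in $\mathsf{CZF^-}$. $R:a\rightrightarrows C$ means $\forall x\in a\exists y\in C\,\langle x,y\rangle\in R$. A set $A$ is regular if it is transitive and for every $a\in A$ and every class $R$ with $R:a\rightrightarrows A$ there is $b\in A$ with $R:a\rightrightarrows b$ and $\forall y\in b\exists x\in a\,\langle x,y\rangle\in R$; BCST-regular if moreover it satisfies Union, Pairing, Emptyset and Binary Intersection. $1=\{0\}$. *)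

(* Defs.v *)
(* The ambient set-theoretic universe is an abstract structure (V, mem) that is
   assumed to be a model of CZF^- (CZF without Subset Collection); axiom schemes
   are stated via a deep embedding of first-order formulas of the language {∈,=},
   so "classes" are formula-definable classes with set parameters. *)

Section SetTheory.
Variable V : Type.
Variable mem : V -> V -> Prop.

(* first-order formulas, de Bruijn variables; in fBAll i f / fBEx i f the
   bounded variable is index 0 of f and the bound is the (outer) variable i *)
Inductive form : Type :=
| fMem : nat -> nat -> form
| fEq  : nat -> nat -> form
| fBot : form
| fAnd : form -> form -> form
| fOr  : form -> form -> form
| fImp : form -> form -> form
| fAll : form -> form
| fEx  : form -> form
| fBAll : nat -> form -> form
| fBEx  : nat -> form -> form.

Definition scons (x : V) (e : nat -> V) : nat -> V :=
  fun n => match n with 0 => x | S m => e m end.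

Fixpoint sat (D : V -> Prop) (e : nat -> V) (f : form) : Prop :=
  match f with
  | fMem i j => mem (e i) (e j)
  | fEq i j => e i = e j
  | fBot => False
  | fAnd f g => sat D e f /\ sat D e g
  | fOr f g => sat D e f \/ sat D e g
  | fImp f g => sat D e f -> sat D e g
  | fAll f => forall x, D x -> sat D (scons x e) f
  | fEx f => exists x, D x /\ sat D (scons x e) f
  | fBAll i f => forall x, D x -> mem x (e i) -> sat D (scons x e) f
  | fBEx i f => exists x, D x /\ mem x (e i) /\ sat D (scons x e) f
  end.

Fixpoint bounded (f : form) : Prop :=
  match f with
  | fMem _ _ | fEq _ _ | fBot => True
  | fAnd f g | fOr f g | fImp f g => bounded f /\ bounded g
  | fAll _ | fEx _ => False
  | fBAll _ f | fBEx _ f => bounded f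
  end.

Definition env_in (D : V -> Prop) (e : nat -> V) : Prop := forall n, D (e n).

Definition CZFm_model (D : V -> Prop) : Prop :=
  (forall x y, D x -> D y -> (forall z, D z -> (mem z x <-> mem z y)) -> x = y) /\
  (forall x y, D x -> D y -> exists z, D z /\
      forall w, D w -> (mem w z <-> (w = x \/ w = y))) /\
  (forall x, D x -> exists z, D z /\
      forall w, D w -> (mem w z <-> exists y, D y /\ mem y x /\ mem w y)) /\
  (exists om, D om /\ forall u, D u ->
      (mem u om <->
        ((forall w, D w -> ~ mem w u) \/
         exists v, D v /\ mem v om /\
           forall w, D w -> (mem w u <-> (mem w v \/ w = v))))) /\
  (forall f e, env_in D e ->
      (forall x, D x -> (forall y, D y -> mem y x -> sat D (scons y e) f) ->
                 sat D (scons x e) f) ->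
      forall x, D x -> sat D (scons x e) f) /\
  (forall f e a, bounded f -> env_in D e -> D a ->
      exists b, D b /\ forall x, D x ->
        (mem x b <-> (mem x a /\ sat D (scons x e) f))) /\
  (forall f e a, env_in D e -> D a ->
      (forall x, D x -> mem x a -> exists y, D y /\ sat D (scons y (scons x e)) f) ->
      exists b, D b /\
        (forall x, D x -> mem x a -> exists y, D y /\ mem y b /\
                                     sat D (scons y (scons x e)) f) /\
        (forall y, D y -> mem y b -> exists x, D x /\ mem x a /\
                                     sat D (scons y (scons x e)) f)).

Definition satV (e : nat -> V) (f : form) : Prop := sat (fun _ => True) e f.

Definition subset (x y : V) : Prop := forall z, mem z x -> mem z y.
Definition transitive (A : V) : Prop := forall x y, mem x A -> mem y x -> mem y A.

Definition is_upair (z x y : V) : Prop := forall w, mem w z <-> (w = x \/ w = y).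
Definition is_opair (p x y : V) : Prop :=
  forall w, mem w p <-> (is_upair w x x \/ is_upair w x y).

Definition pair_in (R x y : V) : Prop := exists p, mem p R /\ is_opair p x y.

(* <x,y> ∈ R for the class R = {p | phi(p, params e)} *)
Definition pair_in_cls (phi : form) (e : nat -> V) (x y : V) : Prop :=
  exists p, is_opair p x y /\ satV (scons p e) phi.

Definition regular (A : V) : Prop :=
  transitive A /\
  forall a phi e, mem a A ->
    (forall x, mem x a -> exists y, mem y A /\ pair_in_cls phi e x y) ->
    exists b, mem b A /\
      (forall x, mem x a -> exists y, mem y b /\ pair_in_cls phi e x y) /\
      (forall y, mem y b -> exists x, mem x a /\ pair_in_cls phi e x y).

Definition BCST_regular (A : V) : Prop :=
  regular A /\
  (forall x, mem x A -> exists u, mem u A /\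
      forall w, mem w u <-> exists y, mem y x /\ mem w y) /\
  (forall x y, mem x A -> mem y A -> exists z, mem z A /\ is_upair z x y) /\
  (exists z, mem z A /\ forall w, ~ mem w z) /\
  (forall x y, mem x A -> mem y A -> exists z, mem z A /\
      forall w, mem w z <-> (mem w x /\ mem w y)).

(* x ∈ P(1), where 1 = {0} *)
Definition sub_one (x : V) : Prop := forall w, mem w x -> forall z, ~ mem z w.

End SetTheory.

(* Main.v *)
Require Import Defs.

Lemma opair_inj2 (V : Type) (mem : V -> V -> Prop)
  (HCZF : CZFm_model V mem (fun _ => True)) p x y x' y' :
  is_opair V mem p x y -> is_opair V mem p x' y' -> y = y'.
Proof.
  intros H1 H2.
  destruct HCZF as [_ [Hpair _]].
  assert (Hup : forall u v, exists z, is_upair V mem z u v).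
  { intros u v. destruct (Hpair u v I I) as [z [_ Hz]]. exists z.
    intro w. exact (Hz w I). }
  assert (Exx : x = x').
  { destruct (Hup x x) as [w0 Hw0].
    assert (Hin : mem w0 p) by (apply H1; left; exact Hw0).
    apply H2 in Hin. destruct Hin as [Hu | Hu].
    - assert (mem x' w0) by (apply Hu; left; reflexivity).
      apply Hw0 in H. destruct H; congruence.
    - assert (mem x' w0) by (apply Hu; left; reflexivity).
      apply Hw0 in H. destruct H; congruence. }
  subst x'.
  assert (A1 : y = x \/ y = y').
  { destruct (Hup x y) as [w Hw].
    assert (Hin : mem w p) by (apply H1; right; exact Hw).
    assert (Hy : mem y w) by (apply Hw; right; reflexivity).
    apply H2 in Hin. destruct Hin as [Hu | Hu]; apply Hu in Hy; tauto. }
  assert (A2 : y' = x \/ y' = y).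
  { destruct (Hup x y') as [w Hw].
    assert (Hin : mem w p) by (apply H2; right; exact Hw).
    assert (Hy : mem y' w) by (apply Hw; right; reflexivity).
    apply H1 in Hin. destruct Hin as [Hu | Hu]; apply Hu in Hy; tauto. }
  destruct A1, A2; congruence.
Qed.

Theorem mainTheorem14 (V : Type) (mem : V -> V -> Prop)
  (HCZF : CZFm_model V mem (fun _ => True))
  (A B P a R : V)
  (HAB : mem A B)
  (HP1 : forall x, sub_one V mem x -> (mem x A <-> mem x B))
  (HA : BCST_regular V mem A)
  (HBt : transitive V mem B)
  (HBm : CZFm_model V mem (fun x => mem x B))
  (HPA : subset V mem P A) (HPB : mem P B)
  (Ha : mem a A) (HRB : mem R B)
  (HRtot : forall x, mem x a -> exists y, mem y A /\ subset V mem y P /\ pair_in V mem R x y)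
  (HRsub : forall p, mem p R -> exists x y, is_opair V mem p x y /\
             mem x a /\ mem y A /\ subset V mem y P)
  (Hmono : forall x y z, mem y A -> mem z A -> subset V mem y z -> subset V mem z P ->
             pair_in V mem R x y -> pair_in V mem R x z) :
  exists b, mem b A /\ subset V mem b P /\ forall x, mem x a -> pair_in V mem R x b.
Proof.
  destruct HA as [[Htr Hreg] [Hun _]].
  assert (Hcls : forall x y, pair_in_cls V mem (fMem 0 1) (fun _ => R) x y <-> pair_in V mem R x y).
  { intros x y; unfold pair_in_cls, pair_in, satV; simpl; split;
    intros [p [H1 H2]]; exists p; split; assumption. }
  destruct (Hreg a (fMem 0 1) (fun _ => R) Ha) as [b0 [Hb0 [Hl Hr]]].
  { intros x Hx. destruct (HRtot x Hx) as [y [Hy [_ Hxy]]].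
    exists y; split; [exact Hy | apply Hcls; exact Hxy]. }
  destruct (Hun b0 Hb0) as [u [Hu Huw]].
  assert (HuP : subset V mem u P).
  { intros w Hw. apply Huw in Hw. destruct Hw as [y [Hyb Hwy]].
    destruct (Hr y Hyb) as [x [_ Hxy]]. apply Hcls in Hxy.
    destruct Hxy as [p [Hp Hop]].
    destruct (HRsub p Hp) as [x' [y' [Hop' [_ [_ Hy'P]]]]].
    rewrite (opair_inj2 V mem HCZF p x y x' y' Hop Hop') in Hwy.
    apply Hy'P; exact Hwy. }
  exists u; split; [exact Hu | split; [exact HuP|]].
  intros x Hx. destruct (Hl x Hx) as [y [Hyb Hxy]]. apply Hcls in Hxy.
  apply (Hmono x y u); try assumption.
  - exact (Htr b0 y Hb0 Hyb).
  - intros w Hw. apply Huw. exists y; split; assumption.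
Qed.
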